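(* Let $n\ge2$, let $P=(p_{kl})$ be an $n\times n$ checkerboard copula, and let $i,j,i',j'\in\{1,\dots,n-1\}$ with $\eta_{i'j'}\neq0$, where $\eta_{ab}=p_{ab}+p_{a+1,b}+p_{a,b+1}+p_{a+1,b+1}$. For $\epsilon\in\mathbb{R}$ put $$\tilde P=P+\epsilon\Big(T^{ij}-\frac{\eta_{ij}}{\eta_{i'j'}}T^{i'j'}\Big).$$ Then $1-\mathrm{tr}(\Xi P\Xi P^\top)=1-\mathrm{tr}(\Xi\tilde P\Xi\tilde P^\top)+O(\epsilon^2)$ as $\epsilon\to0$.
   Context: An $n\times n$ checkerboard copula is a real $n\times n$ matrix with nonnegative entries whose row and column sums all equal $\frac1n$. $\Xi=(\xi_{kl})$ with $\xi_{kl}=1$ if $k=l$, $2$ if $k>l$, $0$ if $k<l$. For $a,b\in\{1,\dots,n-1\}$, $T^{ab}=\mathbf{e}_a\mathbf{e}_b^\top+\mathbf{e}_{a+1}\mathbf{e}_{b+1}^\top-\mathbf{e}_a\mathbf{e}_{b+1}^\top-\mathbf{e}_{a+1}\mathbf{e}_b^\top$, where $\mathbf{e}_k$ is the $k$-th standard unit column vector of $\mathbb{R}^n$. *)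

(* Defs.v *)
From HB Require Import structures.
From mathcomp Require Import all_boot all_order all_algebra.
Set Implicit Arguments. Unset Strict Implicit. Unset Printing Implicit Defensive.
Import Order.TTheory GRing.Theory Num.Theory.
Local Open Scope ring_scope.

(* Indices are 0-based ordinals: paper index a in {1..n-1} is i : 'I_n with i.+1 < n;
   paper index a+1 is (nxt i). *)

(* successor index a+1 (used only when a.+1 < n; defaults to a otherwise) *)
Definition nxt (n : nat) (a : 'I_n) : 'I_n := insubd a a.+1.

Definition checkerboard_copula (R : realFieldType) (n : nat) (P : 'M[R]_n) : Prop :=
  (forall k l, 0 <= P k l) /\
  (forall k, \sum_(l < n) P k l = n%:R^-1) /\
  (forall l, \sum_(k < n) P k l = n%:R^-1).

Definition Xi (R : realFieldType) (n : nat) : 'M[R]_n :=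
  \matrix_(k < n, l < n) (if k == l then 1 else if (l < k)%N then 2 else 0).

Definition Tab (R : realFieldType) (n : nat) (a b : 'I_n) : 'M[R]_n :=
  delta_mx a b + delta_mx (nxt a) (nxt b)
  - delta_mx a (nxt b) - delta_mx (nxt a) b.

Definition etaP (R : realFieldType) (n : nat) (P : 'M[R]_n) (a b : 'I_n) : R :=
  P a b + P (nxt a) b + P a (nxt b) + P (nxt a) (nxt b).

(* Main.v *)
Require Import Defs.
From HB Require Import structures.
From mathcomp Require Import all_boot all_order all_algebra.
From mathcomp Require Import zify ring.
Import Order.TTheory GRing.Theory Num.Theory.
Set Implicit Arguments. Unset Strict Implicit.
Local Open Scope ring_scope.

Lemma xi_nat (R : realFieldType) (k a : nat) :
  ((if k == a then 1 else if (a < k)%N then 2 else 0) -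
   (if k == a.+1 then 1 else if (a.+1 < k)%N then 2 else 0) : R)
  = (k == a)%:R + (k == a.+1)%:R.
Proof.
case: (k =P a) => e1; case: (ltnP a k) => e2; case: (k =P a.+1) => e3;
  case: (ltnP a.+1 k) => e4; try lia; rewrite /= ?mulr1n ?mulr0n; ring.
Qed.

Lemma xi_nat2 (R : realFieldType) (l b : nat) :
  ((if b == l then 1 else if (l < b)%N then 2 else 0) -
   (if b.+1 == l then 1 else if (l < b.+1)%N then 2 else 0) : R)
  = - ((l == b)%:R + (l == b.+1)%:R).
Proof.
case: (b =P l) => e1; case: (ltnP l b) => e2; case: (b.+1 =P l) => e3;
  case: (ltnP l b.+1) => e4; case: (l =P b) => e5; case: (l =P b.+1) => e6;
  try lia; rewrite /= ?mulr1n ?mulr0n; ring.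
Qed.

Lemma nxtE n (a : 'I_n) : (a.+1 < n)%N -> val (nxt a) = a.+1.
Proof. by move=> h; rewrite /nxt val_insubd h. Qed.

Lemma Xcol (R : realFieldType) n (a k : 'I_n) : (a.+1 < n)%N ->
  Xi R n k a - Xi R n k (nxt a) = (k == a)%:R + (k == nxt a)%:R.
Proof.
move=> h; rewrite !mxE -!val_eqE /= !nxtE //; exact: xi_nat.
Qed.

Lemma Xrow (R : realFieldType) n (b l : 'I_n) : (b.+1 < n)%N ->
  Xi R n b l - Xi R n (nxt b) l = - ((l == b)%:R + (l == nxt b)%:R).
Proof.
move=> h; rewrite !mxE -!val_eqE /= !nxtE //; exact: xi_nat2.
Qed.

Lemma entry_delta (R : realFieldType) n (M N : 'M[R]_n) a b k l :
  (M *m delta_mx a b *m N) k l = M k a * N b l.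
Proof.
rewrite mxE (bigD1 b) //= big1 ?addr0.
  rewrite mxE (bigD1 a) //= big1 ?addr0; first by rewrite mxE !eqxx mulr1.
  by move=> i /negbTE ne; rewrite mxE ne mulr0.
move=> j /negbTE ne; rewrite mxE big1 ?mul0r // => i _.
rewrite mxE; case: eqP => [->|]; rewrite ?ne ?andbF ?mulr0 ?mul0r // ?andbF; by rewrite mul0r.
Qed.

Lemma addE (R : realFieldType) n (A B : 'M[R]_n) k l : (A + B) k l = A k l + B k l.
Proof. by rewrite mxE. Qed.
Lemma subE (R : realFieldType) n (A B : 'M[R]_n) k l : (A - B) k l = A k l - B k l.
Proof. by rewrite !mxE. Qed.

Definition Smx (R : realFieldType) n (a b : 'I_n) : 'M[R]_n :=
  delta_mx a b + delta_mx a (nxt b) + delta_mx (nxt a) b + delta_mx (nxt a) (nxt b).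

Lemma MTM (R : realFieldType) n (M : 'M[R]_n) a b (s t : R) :
  (forall k, M k a - M k (nxt a) = s * ((k == a)%:R + (k == nxt a)%:R)) ->
  (forall l, M b l - M (nxt b) l = t * ((l == b)%:R + (l == nxt b)%:R)) ->
  M *m Tab R a b *m M = (s * t) *: Smx R a b.
Proof.
move=> hc hr; apply/matrixP => k l.
rewrite /Tab !mulmxBr !mulmxDr !mulmxBl !mulmxDl !subE !addE !entry_delta.
have e : forall x y : R, x = y -> x = y by [].
rewrite mxE /Smx !addE !mxE -!mulnb !natrM.
transitivity ((M k a - M k (nxt a)) * (M b l - M (nxt b) l)); first ring.
rewrite hc hr; ring.
Qed.

Lemma tr_delta (R : realFieldType) n (M : 'M[R]_n) a b :
  \tr (delta_mx a b *m M) = M b a.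
Proof.
rewrite /mxtrace (bigD1 a) //= big1 ?addr0.
  rewrite mxE (bigD1 b) //= big1 ?addr0; first by rewrite mxE !eqxx mul1r.
  by move=> j /negbTE ne; rewrite mxE eqxx ne mul0r.
move=> i /negbTE ne; rewrite mxE big1 // => j _; by rewrite mxE ne mul0r.
Qed.

Lemma tr_S (R : realFieldType) n (P : 'M[R]_n) a b :
  \tr (Smx R a b *m P^T) = etaP P a b.
Proof.
rewrite /Smx !mulmxDl !mxtraceD !tr_delta !mxE /etaP.
ring.
Qed.

Lemma XTX (R : realFieldType) n (a b : 'I_n) : (a.+1 < n)%N -> (b.+1 < n)%N ->
  Xi R n *m Tab R a b *m Xi R n = - Smx R a b.
Proof.
move=> ha hb; rewrite (@MTM _ _ _ _ _ 1 (-1)) ?mul1r ?mulr1 ?scaleN1r //.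
  by move=> k; rewrite Xcol // mul1r.
by move=> l; rewrite Xrow // mulN1r.
Qed.

Lemma trE (R : realFieldType) n (A : 'M[R]_n) i j : A^T i j = A j i.
Proof. by rewrite mxE. Qed.

Lemma XtTXt (R : realFieldType) n (a b : 'I_n) : (a.+1 < n)%N -> (b.+1 < n)%N ->
  (Xi R n)^T *m Tab R a b *m (Xi R n)^T = - Smx R a b.
Proof.
move=> ha hb; rewrite (@MTM _ _ _ _ _ (-1) 1) ?mul1r ?mulr1 ?scaleN1r //.
  by move=> k; rewrite !trE Xrow // mulN1r.
by move=> l; rewrite !trE Xcol // mul1r.
Qed.

Lemma trDZ (R : realFieldType) n (A B : 'M[R]_n) e : (A + e *: B)^T = A^T + e *: B^T.
Proof. by apply/matrixP => k l; rewrite !mxE. Qed.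

Theorem lemma3 (R : realFieldType) (n : nat) (P : 'M[R]_n) (i j i' j' : 'I_n) :
  (2 <= n)%N -> checkerboard_copula P ->
  (i.+1 < n)%N -> (j.+1 < n)%N -> (i'.+1 < n)%N -> (j'.+1 < n)%N ->
  etaP P i' j' != 0 ->
  let Pt := fun eps : R =>
    P + eps *: (Tab R i j - (etaP P i j / etaP P i' j') *: Tab R i' j') in
  exists C : R, exists2 d : R, 0 < d &
    forall eps : R, `|eps| < d ->
      `|(1 - \tr (Xi R n *m P *m Xi R n *m P^T))
        - (1 - \tr (Xi R n *m Pt eps *m Xi R n *m (Pt eps)^T))| <= C * eps ^+ 2.
Proof.
move=> _ _ hi hj hi' hj' hne Pt.
set X := Xi R n.
set c := etaP P i j / etaP P i' j'.
set D := Tab R i j - c *: Tab R i' j'.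
have hB : X *m D *m X = - Smx R i j + c *: Smx R i' j'.
  rewrite /D mulmxBr mulmxBl -scalemxAr -scalemxAl XTX // XTX //.
  by rewrite scalerN opprK.
have hB' : X^T *m D *m X^T = - Smx R i j + c *: Smx R i' j'.
  rewrite /D mulmxBr mulmxBl -scalemxAr -scalemxAl XtTXt // XtTXt //.
  by rewrite scalerN opprK.
have hlin : \tr ((- Smx R i j + c *: Smx R i' j') *m P^T) = 0.
  rewrite mulmxDl mxtraceD -scalemxAl mxtraceZ tr_S mulNmx -scaleN1r mxtraceZ tr_S.
  by rewrite /c mulfVK // mulN1r addNr.
have t2 : \tr (X *m P *m X *m D^T) = \tr (X^T *m D *m X^T *m P^T).
  rewrite -mxtrace_tr !trmx_mul trmxK mxtrace_mulC !mulmxA.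
  by rewrite -mulmxA mxtrace_mulC !mulmxA.
have hPt : forall e, Pt e = P + e *: D by [].
clearbody D.
exists `|\tr (X *m D *m X *m D^T)|; exists 1 => // eps _.
have -> : (1 - \tr (X *m P *m X *m P^T)) - (1 - \tr (X *m Pt eps *m X *m (Pt eps)^T))
   = eps ^+ 2 * \tr (X *m D *m X *m D^T).
  rewrite hPt trDZ !mulmxDr !mulmxDl -!scalemxAr -!scalemxAl.
  rewrite !mxtraceD ?mxtraceZ t2 hB hB' hlin.
  rewrite expr2; ring.
by rewrite normrM [`|eps ^+ 2|]ger0_norm ?sqr_ge0 // mulrC.
Qed.
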